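(* The map $\tau:\mathcal A_n\to\mathcal L_n$ is a bijection.
   Context: $\mathcal A_n$ is the set of ordered products $A=A_1\times\cdots\times A_k$ (order of factors matters) of connected linear Nakayama algebras over an algebraically closed field with $n$ simple modules in total, identified up to isomorphism of factors; its Kupisch series $[c_0,\dots,c_{n-1}]$ is the concatenation of those of the factors, where a connected linear Nakayama algebra with $m$ simple modules has Kupisch series $[c_0,\dots,c_{m-1}]$, $c_i=\dim e_iA$, characterized by $c_{i+1}+1\ge c_i\ge2$ for $0\le i<m-1$ and $c_{m-1}=1$. $\tau(A)$ is the tree on $\{0,\dots,n\}$, rooted at $n$, in which the parent of $i$ is $i+c_i$ for $0\le i<n$. A rooted tree with vertex set $\{0,\dots,n\}$ is naturally labeled if labels increase towards the root and, for each $i$, all children of $i$ have labels smaller than all children of $i+1$. $\mathcal L_n$ is the set of naturally labeled rooted trees with vertex set $\{0,\dots,n\}$. *)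

(* Defs.v *)
From mathcomp Require Import all_boot.
Set Implicit Arguments. Unset Strict Implicit. Unset Printing Implicit Defensive.

(* Kupisch series [c_0,...,c_{m-1}] of a connected linear Nakayama algebra
   with m >= 1 simple modules: c_{m-1} = 1 and c_{i+1}+1 >= c_i >= 2 for i < m-1. *)
Definition kupisch_conn (c : seq nat) : bool :=
  [&& 0 < size c, last 0 c == 1 &
      all (fun i => (2 <= nth 0 c i) && (nth 0 c i <= (nth 0 c i.+1).+1))
          (iota 0 (size c).-1)].

(* An element of A_n: ordered list of factors, each factor given (up to
   isomorphism) by its Kupisch series; n simple modules in total. *)
Definition in_A (n : nat) (A : seq (seq nat)) : bool :=
  all kupisch_conn A && (sumn (map size A) == n).

(* Kupisch series of a product: concatenation of those of the factors. *)
Definition kupisch (A : seq (seq nat)) : seq nat := flatten A.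

(* A rooted tree on {0,...,n} rooted at n, encoded by its parent map on the
   non-root vertices 0..n-1. *)
Definition tree n := {ffun 'I_n -> 'I_n.+1}.

Definition tau (n : nat) (A : seq (seq nat)) : tree n :=
  [ffun i : 'I_n => inord (i + nth 0 (kupisch A) i)].

(* Naturally labeled: labels increase towards the root, and the children of
   a vertex u all have smaller labels than the children of any larger vertex v. *)
Definition in_L (n : nat) (p : tree n) : bool :=
  [forall i : 'I_n, (i : nat) < p i] &&
  [forall a : 'I_n, forall b : 'I_n, ((p a : nat) < p b) ==> ((a : nat) < b)].

(* Main.v *)
Require Import Defs.
From mathcomp Require Import all_boot.
From mathcomp Require Import zify.
Set Implicit Arguments. Unset Strict Implicit.

Fixpoint good (s : seq nat) : bool :=
  match s with
  | [::] => true
  | [:: x] => x == 1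
  | x :: ((y :: _) as s') => [&& 0 < x, x <= y.+1 & good s']
  end.

Fixpoint blocks (s : seq nat) : seq (seq nat) :=
  match s with
  | [::] => [::]
  | x :: s' => if x == 1 then [:: 1] :: blocks s'
               else match blocks s' with
                    | [::] => [:: [:: x]]
                    | b :: bs => (x :: b) :: bs
                    end
  end.

Lemma kc0 : kupisch_conn [::] = false. Proof. by []. Qed.
Lemma kc1 x : kupisch_conn [:: x] = (x == 1).
Proof. by rewrite /kupisch_conn /= andbT. Qed.
Lemma kc2 x y r : kupisch_conn [:: x, y & r] =
  [&& 2 <= x, x <= y.+1 & kupisch_conn (y :: r)].
Proof.
rewrite /kupisch_conn /=.
rewrite (iotaDl 1 0) all_map /=.
have -> : all (preim (addn 1) (fun i => 1 < nth 0 [:: x, y & r] i <= (nth 0 (y :: r) i).+1))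
   (iota 0 (size r)) =
   all (fun i => 1 < nth 0 (y :: r) i <= (nth 0 r i).+1) (iota 0 (size r)).
  by apply: eq_all => i.
by case: (1 < x); case: (x <= y.+1); case: (last y r == 1).
Qed.

Lemma good_cat b s : kupisch_conn b -> good s -> good (b ++ s).
Proof.
elim: b => [|x b IH] //.
case: b IH => [|y r] IH.
  clear IH; rewrite kc1 => /eqP -> /=. by case: s => [|z s] //= ->.
rewrite kc2 => /and3P [H1 H2 H3] Hs.
have := IH H3 Hs. rewrite /= => ->. rewrite H2 andbT. lia.
Qed.

Lemma good_flatten A : all kupisch_conn A -> good (flatten A).
Proof.
elim: A => [|b A IH] //= /andP [Hb HA]. exact: good_cat (IH HA).
Qed.

Lemma blocks_ne x s : x != 1 -> blocks (x :: s) =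
  match blocks s with [::] => [:: [:: x]] | b :: bs => (x :: b) :: bs end.
Proof. by move=> /negbTE /= ->. Qed.

Lemma blocks_cat b s : kupisch_conn b -> blocks (b ++ s) = b :: blocks s.
Proof.
elim: b => [|x b IH] //.
case: b IH => [|y r] IH.
  by rewrite kc1 => /eqP -> /=.
rewrite kc2 => /and3P [H1 H2 H3].
have Hx : x != 1 by case: eqP H1 => // ->.
by rewrite cat_cons blocks_ne // IH.
Qed.

Lemma blocks_flatten A : all kupisch_conn A -> blocks (flatten A) = A.
Proof.
elim: A => [|b A IH] //= /andP [Hb HA]. by rewrite blocks_cat // IH.
Qed.

Lemma flatten_blocks s : flatten (blocks s) = s.
Proof.
elim: s => [|x s IH] //=.
case: eqP => [->|_]; first by rewrite /= IH.
by move: IH; case: (blocks s) => [|b bs] /= <-.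
Qed.

Lemma good_tail x s : good (x :: s) -> good s.
Proof. by case: s => [|y s] //= /and3P []. Qed.

Lemma good_blocks s : good s -> all kupisch_conn (blocks s).
Proof.
elim: s => [|x s IH] // Hs.
have IHs := IH (good_tail Hs).
case: (boolP (x == 1)) => [/eqP Hx1|Hx]; first by rewrite Hx1 /= IHs.
rewrite blocks_ne //.
case: s Hs IH IHs => [|y r]; first by move=> /= /eqP H; rewrite H in Hx.
move=> Hs _ IHs.
have /and3P [H1 H2 H3] : [&& 0 < x, x <= y.+1 & good (y :: r)] := Hs.
have Hf := flatten_blocks (y :: r).
move: IHs Hf; case: (blocks (y :: r)) => [|b bs] //.
case: b => [|z b] //.
rewrite [flatten _]/= [all _ _]/= => /andP [Hb Hbs] [Hz _].
rewrite [all _ _]/= Hbs andbT kc2 Hb Hz H2 andbT. lia.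
Qed.

Lemma good_nth1 s : good s -> forall i, i < size s ->
  0 < nth 0 s i /\ i + nth 0 s i <= size s.
Proof.
elim: s => [|x s IH] // Hs i.
have IHs := IH (good_tail Hs).
case: s Hs IH IHs => [|y r].
  by move=> /= /eqP -> _ _; case: i.
move=> /= /and3P [H1 H2 H3] _ IHs.
case: i => [|i] /= Hi.
  have := IHs 0 isT. rewrite /=. lia.
have := IHs i Hi. lia.
Qed.

Lemma good_nth2 s : good s -> forall i, i.+1 < size s ->
  nth 0 s i <= (nth 0 s i.+1).+1.
Proof.
elim: s => [|x s IH] // Hs i.
have IHs := IH (good_tail Hs).
case: s Hs IH IHs => [|y r]; first by case: i.
move=> /= /and3P [H1 H2 H3] _ IHs.
case: i => [|i] //= Hi. exact: IHs.
Qed.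

Lemma nth_good s :
  (forall i, i < size s -> 0 < nth 0 s i) ->
  (forall i, i.+1 < size s -> nth 0 s i <= (nth 0 s i.+1).+1) ->
  (forall i, i.+1 = size s -> nth 0 s i = 1) -> good s.
Proof.
elim: s => [|x s IH] // H1 H2 H3.
case: s IH H1 H2 H3 => [|y r] IH H1 H2 H3.
  by have /= -> := H3 0 erefl.
have /= -> := H1 0 isT. have /= -> := H2 0 isT. rewrite /=.
apply: IH.
- move=> i Hi. exact: (H1 i.+1).
- move=> i Hi. exact: (H2 i.+1).
- move=> i Hi. apply: (H3 i.+1). move: Hi => /= ->. by [].
Qed.

Lemma good_mono s : good s -> forall i j, i <= j -> j < size s ->
  i + nth 0 s i <= j + nth 0 s j.
Proof.
move=> Hs i j Hij. elim: j Hij => [|j IH] Hij Hj.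
  by have -> : i = 0 by lia.
case: (ltngtP i j.+1) Hij => // [Hlt|->] _.
  have := IH Hlt (ltnW Hj). have := good_nth2 Hs Hj. lia.
by [].
Qed.

Lemma in_A_good n A : in_A n A ->
  [/\ good (flatten A), size (flatten A) = n & blocks (flatten A) = A].
Proof.
move=> /andP [HA /eqP Hn]. split.
- exact: good_flatten.
- by rewrite size_flatten.
- exact: blocks_flatten.
Qed.

Theorem lemma3p6 (n : nat) :
  (forall A, in_A n A -> in_L (tau n A)) /\
  (forall A B, in_A n A -> in_A n B -> tau n A = tau n B -> A = B) /\
  (forall T : tree n, in_L T -> exists2 A, in_A n A & tau n A = T).
Proof.
split; [|split].
- move=> A HA. have [Hg Hs _] := in_A_good HA.
  have Hv : forall i : 'I_n, (tau n A i : nat) = i + nth 0 (flatten A) i.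
    move=> i. rewrite /tau ffunE inordK // ltnS.
    have := good_nth1 Hg (i := i). rewrite Hs => H. by case: (H (ltn_ord i)).
  apply/andP; split.
    apply/forallP => i. rewrite Hv.
    have := good_nth1 Hg (i := i). rewrite Hs => H. case: (H (ltn_ord i)). lia.
  apply/forallP => a; apply/forallP => b; apply/implyP.
  rewrite !Hv. case: (leqP b a) => // Hba.
  have := good_mono Hg Hba. rewrite Hs => H. have := H (ltn_ord a). lia.
- move=> A B HA HB HT.
  have [HgA HsA HbA] := in_A_good HA.
  have [HgB HsB HbB] := in_A_good HB.
  rewrite -HbA -HbB. congr blocks.
  apply: (@eq_from_nth _ 0); first by rewrite HsA HsB.
  move=> i Hi. rewrite HsA in Hi.
  have := congr1 (fun f : tree n => (f (Ordinal Hi) : nat)) HT.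
  rewrite /= /tau !ffunE /=.
  have Hi1 := Hi. rewrite -HsA in Hi1. have Hi2 := Hi. rewrite -HsB in Hi2.
  have [_ H1] := good_nth1 HgA Hi1. have [_ H2] := good_nth1 HgB Hi2.
  rewrite HsA in H1. rewrite HsB in H2.
  rewrite /kupisch !inordK ?ltnS //. lia.
- case: n => [|n] T.
    move=> _; exists [::]; first by [].
    by apply/ffunP => [[]].
  move=> /andP [/forallP H1 /forallP H2].
  pose s := mkseq (fun i => (T (inord i) : nat) - i) n.+1.
  have Hsz : size s = n.+1 by rewrite size_mkseq.
  have Hnth : forall i, i < n.+1 -> nth 0 s i = (T (inord i) : nat) - i.
    by move=> i Hi; rewrite nth_mkseq.
  have HTi : forall i, i < n.+1 -> i < T (inord i).
    move=> i Hi. have := H1 (inord i). by rewrite inordK.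
  have Hg : good s.
    apply: nth_good; rewrite Hsz.
    + move=> i Hi. rewrite Hnth //. have := HTi i Hi. lia.
    + move=> i Hi. rewrite !Hnth //; last lia.
      have := HTi _ Hi.
      have := H2 (inord i.+1). move=> /forallP /(_ (inord i)) /implyP.
      rewrite !inordK //; last lia. lia.
    + move=> i Hi. rewrite Hnth; last lia.
      have Hi' : i < n.+1 by lia. have := HTi i Hi'.
      have := ltn_ord (T (inord i)). lia.
  exists (blocks s).
    apply/andP; split; first exact: good_blocks.
    by rewrite -size_flatten flatten_blocks Hsz.
  apply/ffunP => i. rewrite /tau ffunE /kupisch flatten_blocks Hnth //.
  apply: val_inj => /=. rewrite inord_val.
  have := HTi i (ltn_ord i). rewrite inord_val => H.
  rewrite subnKC; last lia. by rewrite inord_val.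
Qed.
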